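(* Let $d\ge2$ and $x\in X_d$. If for every grid $y\in\pi^{-1}(x)$ the closure $\overline{A_{d,x}y}\subset\pi^{-1}(x)$ contains an FL grid, then $x$ is GFL. In particular, if for every grid $y\in\pi^{-1}(x)$ the closure $\overline{A_{d,x}y}$ contains a rational grid, then $x$ is GFL.
   Context: $X_d$ is the space of unimodular lattices in $\mathbb{R}^d$, $Y_d$ the space of grids $x+v$ ($x\in X_d$, $v\in\mathbb{R}^d$), $\pi(x+v)=x$; the fiber $\pi^{-1}(x)$ is the torus $\mathbb{R}^d/x$. $A_d$ is the group of positive diagonal $d\times d$ matrices of determinant one, acting by $a(x+v)=ax+av$; $A_{d,x}$ is the stabilizer of $x$ in $A_d$, which acts on $\pi^{-1}(x)$. For $w\in\mathbb{R}^d$, $N(w)=\prod_iw_i$; $N(y)=\inf\{|N(w)|:w\in y\}$; $n(x+v)=x+nv$. A grid $y$ is FL if $N(ny)=0$ for some nonzero integer $n$. A lattice $x$ is GFL if every $y\in\pi^{-1}(x)$ is FL. A grid $y$ is rational if it is a torsion point of the torus $\pi^{-1}(\pi(y))$. *)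

(* Defs.v *)
From HB Require Import structures.
From mathcomp Require Import all_boot all_order all_algebra.
From mathcomp Require Import boolp classical_sets reals.
Set Implicit Arguments. Unset Strict Implicit. Unset Printing Implicit Defensive.
Import Order.TTheory GRing.Theory Num.Theory.
Local Open Scope ring_scope.
Local Open Scope classical_set_scope.

Section Defs.
Variables (R : realType) (d : nat).

Definition lattice_of (g : 'M[R]_d) : set 'rV[R]_d :=
  [set (map_mx (fun k : int => k%:~R) z) *m g | z in [set: 'rV[int]_d]].

Definition unimodular_lattice (x : set 'rV[R]_d) : Prop :=
  exists g : 'M[R]_d, `|\det g| = 1 /\ x = lattice_of g.

Definition Nw (w : 'rV[R]_d) : R := \prod_(i < d) w ord0 i.

Definition grid_N (x : set 'rV[R]_d) (v : 'rV[R]_d) : R :=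
  inf [set `|Nw (w + v)| | w in x].

(* the grid x+v is FL: N(n(x+v)) = N(x + n v) = 0 for some nonzero integer n *)
Definition FL (x : set 'rV[R]_d) (v : 'rV[R]_d) : Prop :=
  exists n : int, n != 0 /\ grid_N x (v *~ n) = 0.

Definition GFL (x : set 'rV[R]_d) : Prop := forall v, FL x v.

(* x+v is rational: torsion point of the torus R^d/x *)
Definition rational_grid (x : set 'rV[R]_d) (v : 'rV[R]_d) : Prop :=
  exists n : nat, (0 < n)%N /\ x (v *+ n).

(* A_d : positive diagonal matrices of determinant one, given by their diagonal *)
Definition A_d : set 'rV[R]_d :=
  [set a | (forall i, 0 < a ord0 i) /\ \prod_(i < d) a ord0 i = 1].

Definition act (a w : 'rV[R]_d) : 'rV[R]_d := \row_i (a ord0 i * w ord0 i).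

Definition stab (x : set 'rV[R]_d) : set 'rV[R]_d :=
  [set a | A_d a /\ [set act a w | w in x] = x].

(* the grid x+v' lies in the closure of A_{d,x}(x+v) inside the torus
   pi^{-1}(x) = R^d/x (quotient topology): a(x+v) = x + a v. *)
Definition in_orbit_closure (x : set 'rV[R]_d) (v v' : 'rV[R]_d) : Prop :=
  forall eps : R, 0 < eps ->
    exists a, stab x a /\
      exists w, x w /\ forall i, `|(act a v + w - v') ord0 i| < eps.

End Defs.

(* Main.v *)
Require Import Defs.
From HB Require Import structures.
From mathcomp Require Import all_boot all_order all_algebra.
From mathcomp Require Import boolp classical_sets reals.
From mathcomp Require Import ring lra.
Import Order.TTheory GRing.Theory Num.Theory.
Local Open Scope ring_scope.
Local Open Scope classical_set_scope.


Lemma prod_cont (R : realType) (I : Type) (s : seq I) (p : I -> R) (eps : R) :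
  0 < eps -> exists2 del : R, 0 < del & forall q : I -> R,
    (forall i, `|q i - p i| < del) ->
    `|\prod_(i <- s) q i - \prod_(i <- s) p i| < eps.
Proof.
elim: s eps => [|i0 s IH] eps he.
  by exists 1 => // q _; rewrite !big_nil subrr normr0.
set P := \prod_(i <- s) p i.
have hp : 0 < `|p i0| + 1 by rewrite ltr_wpDl.
have hP : 0 < `|P| + 1 by rewrite ltr_wpDl.
have he1 : 0 < eps / (2 * (`|p i0| + 1)) by rewrite divr_gt0 // mulr_gt0.
have [d1 hd1 H1] := IH _ he1.
set e2 := eps / (2 * (`|P| + 1)).
have he2 : 0 < e2 by rewrite divr_gt0 // mulr_gt0.
exists (Num.min 1 (Num.min d1 e2)).
  by rewrite !lt_min ltr01 hd1 he2.
move=> q hq.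
rewrite !big_cons -/P.
set Q := \prod_(i <- s) q i.
have hQ : `|Q - P| < eps / (2 * (`|p i0| + 1)).
  apply: H1 => i; move: (hq i); rewrite !lt_min => /and3P[_ -> _] //.
have hqi := hq i0; rewrite !lt_min in hqi; case/and3P: hqi => h1 _ h3.
have hq0 : `|q i0| <= `|p i0| + 1.
  have := ler_normD (q i0 - p i0) (p i0); rewrite subrK => h.
  apply: (le_trans h); rewrite addrC lerD2l; exact: ltW.
have E : q i0 * Q - p i0 * P = q i0 * (Q - P) + (q i0 - p i0) * P by ring.
rewrite E.
apply: (le_lt_trans (ler_normD _ _)).
rewrite !normrM.
have A1 : `|q i0| * `|Q - P| <= (`|p i0| + 1) * `|Q - P|.
  by apply: ler_wpM2r.
have A2 : (`|p i0| + 1) * `|Q - P| < eps / 2.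
  have -> : eps / 2 = (`|p i0| + 1) * (eps / (2 * (`|p i0| + 1))).
    by field; rewrite gt_eqF.
  by rewrite ltr_pM2l.
have A3 : `|q i0 - p i0| * `|P| <= e2 * `|P|.
  by apply: ler_wpM2r => //; exact: ltW.
have A4 : e2 * `|P| <= eps / 2.
  rewrite /e2.
  have -> : eps / (2 * (`|P| + 1)) * `|P| = eps / 2 * (`|P| / (`|P| + 1)).
    by field; rewrite gt_eqF.
  rewrite -[X in _ <= X]mulr1 ler_wpM2l ?divr_ge0 ?ltW //.
  by rewrite ltr_pdivrMr // mul1r ltrDl.
lra.
Qed.

Section Aux.
Variables (R : realType) (d : nat).

Lemma lat_add (g : 'M[R]_d) u v : lattice_of g u -> lattice_of g v ->
  lattice_of g (u + v).
Proof.
case=> z1 _ <-; case=> z2 _ <-; exists (z1 + z2) => //.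
rewrite -mulmxDl; congr (_ *m _); apply/matrixP => i j.
by rewrite !mxE intrD.
Qed.

Lemma lat_mulz (g : 'M[R]_d) u k : lattice_of g u -> lattice_of g (u *~ k).
Proof.
case=> z _ <-; exists (\matrix_(i, j) (z i j * k)) => //.
rewrite -scaler_int scalemxAl; congr (_ *m _); apply/matrixP => i j.
by rewrite !mxE intrM mulrC.
Qed.

Lemma lat0 (g : 'M[R]_d) : lattice_of g 0.
Proof.
exists 0 => //; rewrite -[X in _ = X](mul0mx _ g); congr (_ *m _).
by apply/matrixP => i j; rewrite !mxE.
Qed.

Lemma Nw_act (a w : 'rV[R]_d) : A_d a -> Nw (act a w) = Nw w.
Proof.
case=> _ ha; rewrite /Nw.
under eq_bigr do rewrite mxE.
by rewrite big_split /= ha mul1r.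
Qed.

Lemma actD (a u v : 'rV[R]_d) : act a (u + v) = act a u + act a v.
Proof. by apply/rowP => i; rewrite !mxE mulrDr. Qed.

Lemma act_mulz (a v : 'rV[R]_d) n : act a (v *~ n) = (act a v) *~ n.
Proof.
apply/rowP => i; rewrite -!scaler_int !mxE.
by rewrite mulrCA.
Qed.

Lemma entry_mulz (v : 'rV[R]_d) n i : (v *~ n) ord0 i = v ord0 i * n%:~R.
Proof. by rewrite -scaler_int mxE mulrC. Qed.

End Aux.

Theorem lemma4p4 (R : realType) (d : nat) (x : set 'rV[R]_d) :
  (2 <= d)%N -> unimodular_lattice x ->
  ((forall v : 'rV[R]_d, exists v' : 'rV[R]_d,
       in_orbit_closure x v v' /\ FL x v') -> GFL x) /\
  ((forall v : 'rV[R]_d, exists v' : 'rV[R]_d,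
       in_orbit_closure x v v' /\ rational_grid x v') -> GFL x).
Proof.
move=> hd [g [_ ->]].
set L := lattice_of g.
have Sne : forall v, [set `|Nw (w + v)| | w in L] !=set0.
  by move=> v; exists `|Nw (0 + v)|; exists 0 => //; apply: lat0.
have Slb : forall v, lbound [set `|Nw (w + v)| | w in L] 0.
  by move=> v _ [w _ <-].
have Sge0 : forall v, 0 <= grid_N L v.
  by move=> v; apply: lb_le_inf.
have part1 : (forall v : 'rV[R]_d, exists v' : 'rV[R]_d,
       in_orbit_closure L v v' /\ FL L v') -> GFL L.
  move=> H v; have [v' [hcl [n [hn hN]]]] := H v.
  exists n; split => //.
  apply/eqP; rewrite eq_le Sge0 andbT; rewrite leNgt; apply/negP => hpos.
  set m := grid_N L (v *~ n) in hpos.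
  suff [y Sy ylt] : exists2 y, [set `|Nw (w + v *~ n)| | w in L] y & y < m.
    have := ge_inf (ex_intro _ 0 (Slb (v *~ n))) Sy.
    by rewrite -/(grid_N L (v *~ n)) -/m leNgt ylt.
  have hm2 : 0 < m / 2 by rewrite divr_gt0.
  have hN' : inf [set `|Nw (w + v' *~ n)| | w in L] < m / 2.
    by move: hN; rewrite /grid_N => ->.
  have [y0 [w0 Lw0 <-] y0lt] := inf_lt (Sne (v' *~ n)) hN'.
  have [del hdel Hc] := @prod_cont R _ (index_enum 'I_d)
     (fun i => (w0 + v' *~ n) ord0 i) _ hm2.
  have kpos : 0 < `|n%:~R : R| by rewrite normr_gt0 intr_eq0.
  have [a [[hA hst] [w [Lw hw]]]] := hcl (del / `|n%:~R|) (divr_gt0 hdel kpos).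
  have Lu : L (w0 + w *~ n) by apply: lat_add => //; apply: lat_mulz.
  rewrite -hst in Lu; case: Lu => w1 Lw1 hw1.
  exists `|Nw (w1 + v *~ n)|; first by exists w1.
  rewrite -(@Nw_act R d a _ hA) actD hw1 act_mulz.
  set q := w0 + w *~ n + act a v *~ n.
  have hq : `|Nw q - Nw (w0 + v' *~ n)| < m / 2.
    apply: (Hc (fun i => q ord0 i)) => i.
    have -> : q ord0 i - (w0 + v' *~ n) ord0 i =
              (act a v + w - v') ord0 i * n%:~R.
      by rewrite /q !mxE !entry_mulz !mxE; ring.
    rewrite normrM -(ltr_pdivlMr _ _ kpos); exact: hw.
  have := ler_normD (Nw q - Nw (w0 + v' *~ n)) (Nw (w0 + v' *~ n)).
  rewrite subrK => h; lra.
split => //.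
move=> H; apply: part1 => v; have [v' [hcl [n [hn hx]]]] := H v.
exists v'; split => //; exists n%:Z; split; first by case: n hn hx => [|k].
apply/eqP; rewrite eq_le Sge0 andbT.
have hmem : [set `|Nw (w + v' *~ n%:Z)| | w in L] 0.
  exists (- (v' *+ n)); first by have := @lat_mulz R d g _ (-1) hx; rewrite mulrN1z.
  rewrite pmulrn addNr /Nw; apply/eqP; rewrite normr_eq0.
  apply/eqP; rewrite (bigD1 (Ordinal (leq_trans (isT : (0 < 2)%N) hd))) //=.
  by rewrite mxE mul0r.
exact: (ge_inf (ex_intro _ 0 (Slb _)) hmem).
Qed.
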